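(* Let $n\ge2$, let $c=(c_{i,j})$ be an $n\times(n+1)$ matrix with entries in $\{0,1\}$, $\sigma_1,\ldots,\sigma_n>0$, $\gamma_1,\ldots,\gamma_{n+1}>0$. Let $\mathbf{X}=(X_1,\ldots,X_n)'$ have decumulative distribution function \[ \mathbf{P}[X_1>x_1,\ldots,X_n>x_n]=\prod_{j=1}^{n+1}\left(1+\sum_{i=1}^n\frac{c_{i,j}}{\sigma_i}x_i\right)^{-\gamma_j},\quad (x_1,\ldots,x_n)'\in(0,\infty)^n. \] For $1\le k\ne l\le n$ define $\gamma_{c,(k,l)}=\gamma_{c,(l,k)}=\sum_jc_{k,j}c_{l,j}\gamma_j$ (assumed $>0$), $\gamma_{c,k}=\sum_jc_{k,j}(1-c_{l,j})\gamma_j$, $\gamma_{c,l}=\sum_jc_{l,j}(1-c_{k,j})\gamma_j$, $\gamma^\ast_{c,l}=\gamma_{c,l}+\gamma_{c,(k,l)}$, and $m(x)=\frac{\sigma_k}{\gamma_{c,(k,l)}}\left(1+\frac{x}{\sigma_l}\right)$. Then for $x_k,x_l>0$, \[ \mathbf{P}[X_k>x_k\mid X_l=x_l]=\left(\frac{\gamma_{c,(k,l)}}{\gamma^\ast_{c,l}}+\frac{\gamma_{c,l}}{\gamma^\ast_{c,l}}\left(1+\frac{x_k}{\gamma_{c,(k,l)}m(x_l)}\right)\right)\left(1+\frac{x_k}{\sigma_k}\right)^{-\gamma_{c,k}}\left(1+\frac{x_k}{\gamma_{c,(k,l)}m(x_l)}\right)^{-\gamma_{c,(l,k)}-1}. \]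 *)

(* Defs.v *)
From HB Require Import structures.
From mathcomp Require Import all_boot all_order all_algebra.
From mathcomp Require Import all_classical all_reals all_analysis.
Set Implicit Arguments. Unset Strict Implicit. Unset Printing Implicit Defensive.
Import Order.TTheory GRing.Theory Num.Theory.
Local Open Scope ring_scope.

Section Gammas.
Variables (R : realType) (n : nat).
Variables (c : 'I_n -> 'I_n.+1 -> bool) (gamma : 'I_n.+1 -> R).

Definition gamma_pair (k l : 'I_n) : R :=
  \sum_(j < n.+1) (c k j)%:R * (c l j)%:R * gamma j.

Definition gamma_single (k l : 'I_n) : R :=
  \sum_(j < n.+1) (c k j)%:R * (1 - (c l j)%:R) * gamma j.

Definition gamma_star (k l : 'I_n) : R :=
  gamma_single l k + gamma_pair k l.

Definition m_fun (sigma : 'I_n -> R) (k l : 'I_n) (x : R) : R :=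
  sigma k / gamma_pair k l * (1 + x / sigma l).
End Gammas.

(* Main.v *)
Require Import Defs.
From HB Require Import structures.
From mathcomp Require Import all_boot all_order all_algebra.
From mathcomp Require Import all_classical all_reals all_analysis.
From mathcomp Require Import ring lra.
Import Order.TTheory GRing.Theory Num.Theory.
Import numFieldNormedType.Exports.
Local Open Scope classical_set_scope.
Local Open Scope ring_scope.



Section Aux.
Variable R : realType.

Lemma right_finer : ((0:R)^'+ : set_system R) `=>` (0:R)^'.
Proof.
move=> A /= [e e0 HA]; exists e => //= y ye y0.
by apply: HA => //; rewrite gt_eqF.
Qed.

Lemma key_lim (u : R -> R) (x du : R) : is_derive x 1 u du ->
  (fun h => h^-1 * (u (x - h) - u (x + h))) @ 0^'+ --> - (du + du).
Proof.
move=> [uex uval].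
set q := fun h : R => h^-1 *: ((u \o shift x) (h *: 1) - u x).
have hq : q @ 0^' --> du by rewrite -uval.
have hq1 : q @ 0^'+ --> du by apply: cvg_trans hq; apply: cvg_app; exact: right_finer.
have hq2 : (q \o -%R) @ 0^'+ --> du.
  have : q @ 0^'- --> du.
    apply: cvg_trans hq; apply: cvg_app.
    move=> A /= [e e0 HA]; exists e => //= y ye y0.
    by apply: HA => //; rewrite lt_eqF.
  by move/cvg_at_leftNP; rewrite oppr0.
have -> : (fun h => h^-1 * (u (x - h) - u (x + h))) = (fun h => - (q h + (q \o -%R) h)).
  have qE : forall h, q h = h^-1 * (u (x + h) - u x).
    by move=> h; rewrite /q /= -[h%:A]/(h * 1) mulr1 (addrC h x).
  apply/funext => h /=; rewrite !qE invrN -(addrC (-h)) -(addrC h). ring.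
exact: (cvgN (cvgD hq1 hq2)).
Qed.

Lemma ratio_lim (f g : R -> R) (x df dg : R) :
  is_derive x 1 f df -> is_derive x 1 g dg -> dg != 0 ->
  (fun h => (f (x - h) - f (x + h)) / (g (x - h) - g (x + h))) @ 0^'+ --> df / dg.
Proof.
move=> Hf Hg dg0.
have dd0 : - (dg + dg) != 0 by rewrite oppr_eq0 -mulr2n mulrn_eq0 negb_or dg0.
have Hm : ((fun h => h^-1 * (f (x-h) - f (x+h))) \* (fun h => (h^-1 * (g (x-h) - g (x+h)))^-1)) @ 0^'+ --> (-(df+df)) * (-(dg+dg))^-1.
  apply: cvgM; first exact: key_lim.
  exact: (cvgV dd0 (key_lim _ _ _ Hg)).
have -> : df / dg = - (df + df) * (- (dg + dg))^-1.
  by field; rewrite -oppr_eq0 dd0 dg0.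
apply: cvg_trans Hm; apply: near_eq_cvg; near=> h.
have h0 : h != 0 by rewrite gt_eqF //; near: h; exact: nbhs_right_gt.
have E : forall a b : R, h^-1 * a / (h^-1 * b) = a / b by move=> a b; rewrite invfM invrK mulrACA mulVf // mul1r.
exact: E.
Unshelve. all: by end_near. Qed.


End Aux.

Lemma prod_powR (R : realType) (A : R) (m : nat) (e : 'I_m -> R) : 0 < A ->
  \prod_(j < m) A `^ (e j) = A `^ (\sum_(j < m) e j).
Proof.
move=> A0; apply: (big_ind2 (fun a b => a = A `^ b)).
- by rewrite powRr0.
- by move=> a b c d -> ->; rewrite powRD // (gt_eqF A0) implybT.
- by [].
Qed.

Definition Hf (R : realType) (n : nat) (c : 'I_n -> 'I_n.+1 -> bool)
  (sigma : 'I_n -> R) (gamma : 'I_n.+1 -> R) (k l : 'I_n) (a y : R) : R :=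
  \prod_(j < n.+1) (1 + ((c k j)%:R / sigma k * a + (c l j)%:R / sigma l * y)) `^ (- gamma j).

Arguments Hf {R n}.

Lemma Hf_closed (R : realType) (n : nat) (c : 'I_n -> 'I_n.+1 -> bool)
  (sigma : 'I_n -> R) (gamma : 'I_n.+1 -> R) (k l : 'I_n) (a y : R) :
  0 < 1 + a / sigma k + y / sigma l -> 0 < 1 + a / sigma k -> 0 < 1 + y / sigma l ->
  Hf c sigma gamma k l a y =
  (1 + a / sigma k + y / sigma l) `^ (- gamma_pair c gamma k l)
  * (1 + a / sigma k) `^ (- gamma_single c gamma k l)
  * (1 + y / sigma l) `^ (- gamma_single c gamma l k).
Proof.
move=> hA hC hB.
rewrite /gamma_pair /gamma_single -!sumrN -!prod_powR // -!big_split /=.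
apply: eq_bigr => j _.
case: (c k j); case: (c l j) => /=;
  rewrite ?subrr ?mul1r ?mul0r ?subrr ?mul0r ?subr0 ?mulr0 ?mulr1 ?oppr0 ?powRr0 ?add0r ?addr0 ?mul1r ?mulr1.
- by rewrite addrA (mulrC (sigma k)^-1) (mulrC (sigma l)^-1).
- by rewrite (mulrC (sigma k)^-1).
- by rewrite (mulrC (sigma l)^-1).
- by rewrite powR1.
Qed.




Lemma is_derive_affine (R : realType) (c0 s y : R) :
  is_derive y 1 (fun z : R => c0 + z / s) (s^-1).
Proof.
have H : is_derive y 1 (cst c0 + s^-1 \*: id) (0 + s^-1 *: (1:R)) by apply: is_deriveD.
have E : (cst c0 + s^-1 \*: id) = (fun z : R => c0 + z / s).
  by apply/funext => z /=; rewrite mulrC.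
rewrite -E; apply: is_derive_eq H _.
by rewrite add0r [_ *: _]mulr1.
Qed.

Lemma is_derive_Cl (R : realType) (a y sk sl p q r : R) :
  0 < 1 + a / sk + y / sl -> 0 < 1 + y / sl ->
  is_derive y 1 (fun z => (1 + a / sk + z / sl) `^ p * (1 + a / sk) `^ q * (1 + z / sl) `^ r)
   ((p * (1 + a / sk + y / sl) `^ (p - 1) * sl^-1) * (1 + a / sk) `^ q * (1 + y / sl) `^ r
    + (1 + a / sk + y / sl) `^ p * (1 + a / sk) `^ q * (r * (1 + y / sl) `^ (r - 1) * sl^-1)).
Proof.
move=> hA hB.
have HA : is_derive y 1 (@powR R ^~ p \o (fun z => 1 + a / sk + z / sl))
   (p * (1 + a / sk + y / sl) `^ (p - 1) * sl^-1).
  apply: is_derive1_comp; last exact: is_derive_affine.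
  exact: is_derive1_powR.
have HB : is_derive y 1 (@powR R ^~ r \o (fun z => 1 + z / sl))
   (r * (1 + y / sl) `^ (r - 1) * sl^-1).
  apply: is_derive1_comp; last exact: is_derive_affine.
  exact: is_derive1_powR.
have H := is_deriveM (is_deriveM HA (is_derive_cst ((1 + a / sk) `^ q) y 1)) HB.
apply: is_derive_eq H _.
rewrite /= /GRing.scale /=.
have fM : forall (f g : R -> R) z, (f * g) z = f z * g z by [].
rewrite fM /=. ring.
Qed.



Lemma powRm1 (R : realType) (x p : R) : 0 < x -> x `^ (p - 1) = x `^ p / x.
Proof.
move=> x0; rewrite powRD; last by rewrite (gt_eqF x0) implybT.
by rewrite powR_inv1 // ltW.
Qed.

Lemma final_alg (R : realType) (sk sl gp gsk gsl xk xl : R) :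
  0 < sk -> 0 < sl -> 0 < gp -> 0 <= gsl -> 0 < xk -> 0 < xl ->
  let A := 1 + xk / sk + xl / sl in
  let A0 := 1 + 0 / sk + xl / sl in
  let B := 1 + xl / sl in
  let C := 1 + xk / sk in
  let C0 := 1 + 0 / sk in
  let u := 1 + xk / (gp * (sk / gp * (1 + xl / sl))) in
  let df := ((- gp) * A `^ (- gp - 1) * sl^-1) * C `^ (- gsk) * B `^ (- gsl)
     + A `^ (- gp) * C `^ (- gsk) * ((- gsl) * B `^ (- gsl - 1) * sl^-1) in
  let dg := ((- gp) * A0 `^ (- gp - 1) * sl^-1) * C0 `^ (- gsk) * B `^ (- gsl)
     + A0 `^ (- gp) * C0 `^ (- gsk) * ((- gsl) * B `^ (- gsl - 1) * sl^-1) in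
  dg != 0 /\
  df / dg = (gp / (gsl + gp) + gsl / (gsl + gp) * u) * C `^ (- gsk) * u `^ (- gp - 1).
Proof.
move=> sk0 sl0 gp0 gsl0 xk0 xl0 A A0 B C C0 u df dg.
have xs0 : 0 < xl / sl by exact: divr_gt0.
have xs1 : 0 < xk / sk by exact: divr_gt0.
have B0 : 0 < B by rewrite /B; lra.
have C0p : 0 < C by rewrite /C; lra.
have hA0 : A0 = B by rewrite /A0 /B mul0r addr0.
have hC0 : C0 = 1 by rewrite /C0 mul0r addr0.
have hAu : A = u * B.
  rewrite /A /u /B; field.
  rewrite (gt_eqF gp0) (gt_eqF sk0) (gt_eqF sl0) /= andbT gt_eqF //; lra.
have u0 : 0 < u.
  have : 0 < A by rewrite /A; lra.
  by rewrite hAu pmulr_lgt0.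
have A0p : 0 < A by rewrite hAu mulr_gt0.
rewrite /df /dg hA0 hC0 powR1 !powRm1 // hAu powRM ?ltW // -hAu.
set U := u `^ (- gp); set Bp := B `^ (- gp); set Bl := B `^ (- gsl); set Cs := C `^ (- gsk).
have U0 : 0 < U by exact: powR_gt0.
have Bp0 : 0 < Bp by exact: powR_gt0.
have Bl0 : 0 < Bl by exact: powR_gt0.
have Cs0 : 0 < Cs by exact: powR_gt0.
have gs0 : 0 < gsl + gp by lra.
have nz : forall z : R, 0 < z -> z != 0 by move=> z z0; rewrite gt_eqF.
have E : - gp * (Bp / B) / sl * 1 * Bl + Bp * 1 * (- gsl * (Bl / B) / sl)
   = - (Bp * Bl * (gsl + gp) / (B * sl)).
  by field; rewrite !nz.
rewrite E; split.
  by rewrite oppr_eq0 nz // divr_gt0 // ?mulr_gt0.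
rewrite hAu; field.
rewrite !nz //.
Qed.

Theorem theorem3p2 (R : realType) (d : measure_display) (T : measurableType d)
  (P : probability T R) (n : nat) (X : 'I_n -> {RV P >-> R})
  (c : 'I_n -> 'I_n.+1 -> bool) (sigma : 'I_n -> R) (gamma : 'I_n.+1 -> R) :
  (2 <= n)%N ->
  (forall i, 0 < sigma i) ->
  (forall j, 0 < gamma j) ->
  (forall x : 'I_n -> R, (forall i, 0 < x i) ->
     P [set t | forall i, x i < X i t] =
     (\prod_(j < n.+1)
        (1 + \sum_(i < n) (c i j)%:R / sigma i * x i) `^ (- gamma j))%:E) ->
  forall k l : 'I_n, k != l ->
  0 < gamma_pair c gamma k l ->
  forall xk xl : R, 0 < xk -> 0 < xl ->
  (fun h : R =>
     fine (P [set t | xk < X k t /\ xl - h < X l t <= xl + h])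
     / fine (P [set t | xl - h < X l t <= xl + h]))
  @ 0^'+ -->
  ((gamma_pair c gamma k l / gamma_star c gamma k l
    + gamma_single c gamma l k / gamma_star c gamma k l
      * (1 + xk / (gamma_pair c gamma k l * m_fun c gamma sigma k l xl)))
   * (1 + xk / sigma k) `^ (- gamma_single c gamma k l)
   * (1 + xk / (gamma_pair c gamma k l * m_fun c gamma sigma k l xl))
       `^ (- gamma_pair c gamma l k - 1)).

Proof.
move=> n2 sig0 gam0 Hsurv k l kl gp0 xk xl xk0 xl0.
have mgt : forall i (a : R), measurable [set t | a < X i t].
  move=> i a; have := measurable_funPTI (X i) (measurable_itv `]a, +oo[).
  congr measurable; apply/seteqP; split => t /=; by rewrite in_itv /= andbT.
have mall : forall x : 'I_n -> R, measurable [set t | forall i, x i < X i t].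
  move=> x; have -> : [set t | forall i, x i < X i t] = \bigcap_(i in setT) [set t | x i < X i t].
    by apply/seteqP; split => t /= H i *; apply: H.
  apply: fin_bigcap_measurable; first exact: finite_finset.
  by move=> i _; exact: mgt.
pose form := fun x : 'I_n -> R => \prod_(j < n.+1)
        (1 + \sum_(i < n) (c i j)%:R / sigma i * x i) `^ (- gamma j).
have Hnn : forall x : 'I_n -> R, (forall i, 0 <= x i) ->
    P [set t | forall i, x i < X i t] = (form x)%:E.
  move=> x x0.
  pose e m := (m.+1%:R : R)^-1.
  have e0 : forall m, 0 < e m by move=> m; rewrite /e invr_gt0 ltr0n.
  pose F m := [set t | forall i, x i + e m < X i t].
  have mF : forall m, measurable (F m) by move=> m; exact: (mall (fun i => x i + e m)).
  have ndF : nondecreasing_seq F.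
    move=> m m' mm'; apply/subsetPset => t /= H i.
    apply: le_lt_trans (H i); rewrite lerD2l /e lef_pV2 ?posrE ?ltr0n // ler_nat ltnS //.
  have UF : \bigcup_m F m = [set t | forall i, x i < X i t].
    apply/seteqP; split => t /=.
      by move=> [m _ H] i; apply: lt_trans (H i); rewrite ltrDl.
    move=> H.
    have [f Hf] := fin_all_exists (fun i => ltr_add_invr (H i)).
    exists (\max_i f i) => // i; apply: le_lt_trans (Hf i).
    rewrite lerD2l lef_pV2 ?posrE ?ltr0n // ler_nat ltnS.
    exact: (leq_bigmax i).
  have L1 := @nondecreasing_cvg_mu _ _ R P F mF (ltac:(rewrite UF; exact: mall)) ndF.
  rewrite UF in L1.
  have L2 : (fun m => (form (fun i => x i + e m))%:E) @ \oo --> (form x)%:E.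
    apply: cvg_EFin; first exact: nearW.
    rewrite /comp /= /form.
    apply: cvg_big => [|j _]; first exact: mul_continuous.
    have hs : 0 <= \sum_(i < n) (c i j)%:R / sigma i * x i.
      by apply: sumr_ge0 => i _; apply: mulr_ge0 => //; apply: divr_ge0 => //; exact: ltW.
    have hb : (fun m => 1 + \sum_(i < n) (c i j)%:R / sigma i * (x i + e m)) @ \oo -->
              1 + \sum_(i < n) (c i j)%:R / sigma i * x i.
      apply: cvgD; first exact: cvg_cst.
      apply: cvg_big => [|i _]; first exact: add_continuous.
      apply: cvgM; first exact: cvg_cst.
      rewrite -[X in _ --> X]addr0; apply: cvgD; first exact: cvg_cst.
      exact: cvg_harmonic.
    have cont : {for 1 + \sum_(i < n) (c i j)%:R / sigma i * x i, continuous (@powR R ^~ (- gamma j))}.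
      apply: differentiable_continuous; apply/derivable1_diffP; apply: derivable_powR.
      by rewrite in_itv /= andbT; lra.
    exact: (@continuous_cvg _ _ _ _ _ _ _ _ cont hb).
  have E : P \o F = (fun m => (form (fun i => x i + e m))%:E).
    apply/funext => m /=; apply: Hsurv => i.
    by apply: lt_le_trans (e0 m) _; rewrite lerDr.
  rewrite E in L1.
  exact: (cvg_unique _ L1 L2).
have PZ : P [set t | forall i, 0 < X i t] = 1%E.
  have F0 : form (fun=> 0) = 1.
    rewrite /form big1 // => j _; rewrite big1 ?addr0 ?powR1 // => i _; exact: mulr0.
  by rewrite -F0 -Hnn.
have mZ : measurable [set t | forall i, 0 < X i t] := mall (fun=> 0).
have PSZ : forall S, measurable S -> P S = P (S `&` [set t | forall i, 0 < X i t]).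
  move=> S mS; rewrite (measureDI P mS mZ).
  rewrite [X in (X + _)%E](_ : _ = 0%E) ?add0e //.
    apply/eqP; rewrite eq_le measure_ge0 andbT.
    have : P (~` [set t | forall i, 0 < X i t]) = 0%E.
      by rewrite probability_setC // PZ subee.
    move=> <-; apply: le_measure; rewrite ?inE.
    - exact: measurableD.
    - exact: measurableC.
    - by move=> t [].
have lk : (l == k) = false by rewrite eq_sym; exact: negbTE.
have H2 : forall a y, 0 <= a -> 0 <= y ->
    P [set t | a < X k t /\ y < X l t] = (Hf c sigma gamma k l a y)%:E.
  move=> a y a0 y0.
  rewrite PSZ; last exact: (measurableI _ _ (mgt k a) (mgt l y)).
  pose x := fun i => if i == k then a else if i == l then y else 0.
  have -> : [set t | a < X k t /\ y < X l t] `&` [set t | forall i, 0 < X i t]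
      = [set t | forall i, x i < X i t].
    apply/seteqP; split => t /=.
      move=> [[Hk Hl] Hz] i; rewrite /x.
      by case: eqP => [->|_] //; case: eqP => [->|_] //; exact: Hz.
    move=> H; split; [split|].
    - by have := H k; rewrite /x eqxx.
    - by have := H l; rewrite /x lk eqxx.
    - move=> i; apply: le_lt_trans (H i); rewrite /x.
      by case: ifP => _ //; case: ifP => _ //.
  rewrite Hnn; last by move=> i; rewrite /x; case: ifP => _ //; case: ifP.
  congr EFin; rewrite /form /Hf; apply: eq_bigr => j _; congr (_ `^ _); congr (_ + _).
  rewrite (bigD1 k) //= (bigD1 l) /=; last by rewrite lk.
  rewrite big1 ?addr0; last first.
    by move=> i /andP[ik il]; rewrite /x (negbTE ik) (negbTE il) mulr0.
  by rewrite /x eqxx lk eqxx.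
have H1 : forall y, 0 <= y -> P [set t | y < X l t] = (Hf c sigma gamma k l 0 y)%:E.
  move=> y y0; rewrite -H2 //.
  rewrite PSZ ?mgt // [RHS]PSZ; last exact: (measurableI _ _ (mgt k 0) (mgt l y)).
  congr (P _); apply/seteqP; split => t /=.
    by move=> [Hl Hz]; split => //; split => //; exact: Hz.
  by move=> [[_ Hl] Hz].
have gpsym : gamma_pair c gamma l k = gamma_pair c gamma k l.
  by rewrite /gamma_pair; apply: eq_bigr => j _; rewrite (mulrC (c l j)%:R).
have gsl0 : 0 <= gamma_single c gamma l k.
  apply: sumr_ge0 => j _; apply: mulr_ge0; last exact: ltW.
  by case: (c l j); case: (c k j); rewrite /= ?subrr ?subr0 ?mulr0 ?mul0r ?mulr1.
have := @final_alg R (sigma k) (sigma l) (gamma_pair c gamma k l)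
  (gamma_single c gamma k l) (gamma_single c gamma l k) xk xl (sig0 k) (sig0 l)
  gp0 gsl0 xk0 xl0.
rewrite /= => -[dg0 Eq].
rewrite /gamma_star /m_fun gpsym -Eq.
have xs0 : 0 < xl / sigma l by exact: divr_gt0.
have xs1 : 0 < xk / sigma k by exact: divr_gt0.
have Hd1 := @is_derive_Cl R xk xl (sigma k) (sigma l) (- gamma_pair c gamma k l)
  (- gamma_single c gamma k l) (- gamma_single c gamma l k) ltac:(lra) ltac:(lra).
have Hd2 := @is_derive_Cl R 0 xl (sigma k) (sigma l) (- gamma_pair c gamma k l)
  (- gamma_single c gamma k l) (- gamma_single c gamma l k)
  ltac:(rewrite mul0r; lra) ltac:(lra).
apply: cvg_trans (@ratio_lim R _ _ _ _ _ Hd1 Hd2 dg0).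
apply: near_eq_cvg; near=> h.
have h0 : 0 < h by near: h; exact: nbhs_right_gt.
have hxl : h < xl by near: h; exact: nbhs_right_lt.
have PD : forall S1 S2, measurable S1 -> measurable S2 -> S2 `<=` S1 ->
    P (S1 `\` S2) = (P S1 - P S2)%E.
  move=> S1 S2 m1 m2 s21; rewrite measureD // ?(setIidr s21) //.
  exact: (le_lt_trans (probability_le1 P m1) (ltry 1)).
have E1 : [set t | xk < X k t /\ xl - h < X l t <= xl + h] =
    [set t | xk < X k t /\ xl - h < X l t] `\` [set t | xk < X k t /\ xl + h < X l t].
  apply/seteqP; split => t /=.
    by move=> [Hk /andP[Ha Hb]]; split => // -[_]; rewrite ltNge Hb.
  move=> [[Hk Ha] Hb]; split => //; apply/andP; split => //.
  by rewrite leNgt; apply/negP => Hc; exact: Hb.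
have E2 : [set t | xl - h < X l t <= xl + h] =
    [set t | xl - h < X l t] `\` [set t | xl + h < X l t].
  apply/seteqP; split => t /=.
    by move=> /andP[Ha Hb]; split => //; rewrite ltNge Hb.
  move=> [Ha Hb]; apply/andP; split => //.
  by rewrite leNgt; apply/negP => Hc; exact: Hb.
have hh : xl - h < xl + h by lra.
have sl0 := sig0 l.
have p1 : 0 < (xl + h) / sigma l by apply: divr_gt0; lra.
have p2 : 0 < (xl - h) / sigma l by apply: divr_gt0; lra.
rewrite E1 E2 !PD.
- rewrite !H2 ?H1; try lra.
  rewrite -!EFinB /= !Hf_closed //; rewrite ?mul0r; try lra.
all: try exact: mgt.
all: try exact: (measurableI _ _ (mgt _ _) (mgt _ _)).
- by move=> t /= H; exact: lt_trans hh H.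
- by move=> t /= [Hk H]; split => //; exact: lt_trans hh H.
Unshelve. all: by end_near.
Qed.
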